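(* Let $R$ be an associative ring with identity and involution $*$, and let $a\in R^{\#}\cap R^{\dagger}$. Then $a\in R^{SEP}$ if and only if $a(a^{\#})^*a^{\dagger}a^{\#}$ is a projection, i.e. $a(a^{\#})^*a^{\dagger}a^{\#}\in PE(R)$.
   Context: An involution on $R$ is a map $x\mapsto x^*$ with $(x^* )^*=x$, $(x+y)^*=x^*+y^*$, $(xy)^*=y^*x^*$. An element $a$ is Moore–Penrose invertible if there is $b$ with $aba=a$, $bab=b$, $(ab)^*=ab$, $(ba)^*=ba$; such $b$ is unique, denoted $a^{\dagger}$, and $R^{\dagger}$ is the set of such $a$. An element $a$ is group invertible if there is $b$ with $aba=a$, $bab=b$, $ab=ba$; such $b$ is unique, denoted $a^{\#}$, and $R^{\#}$ is the set of such $a$. $PE(R)=\{e\in R: e^2=e=e^*\}$ is the set of projections. For $a\in R^{\#}\cap R^{\dagger}$: $a$ is EP if $a^{\#}=a^{\dagger}$; $a$ is a partial isometry if $a^*=a^{\dagger}$; $a$ is SEP (strongly EP) if $a^*=a^{\dagger}=a^{\#}$. $R^{SEP}$ denotes the set of SEP elements. *)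

(* Defs.v *)
From mathcomp Require Import all_boot all_algebra.
Set Implicit Arguments. Unset Strict Implicit. Unset Printing Implicit Defensive.
Import GRing.Theory.
Local Open Scope ring_scope.

Definition involution (R : pzRingType) (star : R -> R) : Prop :=
  [/\ forall x, star (star x) = x,
      forall x y, star (x + y) = star x + star y &
      forall x y, star (x * y) = star y * star x].

Definition is_MP_inverse (R : pzRingType) (star : R -> R) (a b : R) : Prop :=
  [/\ a * b * a = a, b * a * b = b, star (a * b) = a * b & star (b * a) = b * a].

Definition is_group_inverse (R : pzRingType) (a b : R) : Prop :=
  [/\ a * b * a = a, b * a * b = b & a * b = b * a].

Definition is_projection (R : pzRingType) (star : R -> R) (e : R) : Prop :=
  e * e = e /\ e = star e.

Definition is_SEP (R : pzRingType) (star : R -> R) (a : R) : Prop :=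
  exists b c : R, [/\ is_group_inverse a b, is_MP_inverse star a c,
                      star a = c & c = b].

(* Main.v *)
Require Import Defs.
From mathcomp Require Import all_boot all_algebra.
Local Open Scope ring_scope.
Import GRing.Theory.

Lemma L2 (R : pzRingType) (w x y z : R) : x * y = z -> w * x * y = w * z.
Proof. by move=> <-; rewrite mulrA. Qed.
Lemma L3 (R : pzRingType) (w x y z t : R) : x * y * z = t -> w * x * y * z = w * t.
Proof. by move=> <-; rewrite !mulrA. Qed.

Arguments L2 {R w x y z}.
Arguments L3 {R w x y z t}.

Lemma mp_uniq (R : pzRingType) (star : R -> R) (a b c : R) :
  involution star -> is_MP_inverse star a b -> is_MP_inverse star a c -> b = c.
Proof.
case=> ss _ sm [b1 b2 b3 b4] [c1 c2 c3 c4].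
have Hb : b = b * a * c.
  transitivity (b * star (a * b)); first by rewrite b3 mulrA b2.
  transitivity (b * star b * star (a * c * a)); first by rewrite c1 sm mulrA.
  rewrite (sm (a * c)) c3 -mulrA (mulrA (star b)) -sm b3.
  by rewrite !mulrA b2.
have Hc : c = b * a * c.
  transitivity (star (c * a) * c); first by rewrite c4 c2.
  transitivity (star (a * (b * a)) * star c * c); first by rewrite mulrA b1 sm.
  rewrite (sm a) b4 -(mulrA _ (star a)) -sm c4.
  have -> : b * a * (c * a) * c = b * a * (c * a * c) by rewrite !mulrA.
  by rewrite c2.
by rewrite Hb -Hc.
Qed.

Lemma grp_uniq (R : pzRingType) (a b c : R) :
  is_group_inverse a b -> is_group_inverse a c -> b = c.
Proof.
case=> b1 b2 b3 [c1 c2 c3].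
have Hb : b = b * a * c.
  transitivity (b * b * a); first by rewrite -mulrA -b3 mulrA b2.
  have e : b * b * a = b by rewrite -mulrA -b3 mulrA b2.
  by rewrite -{1}c1 !mulrA e -mulrA -c3 mulrA.
have Hc : c = b * a * c.
  transitivity (a * c * c); first by rewrite c3 c2.
  have e : a * c * c = c by rewrite c3 c2.
  rewrite -{1}b1 -(mulrA (a * b)) -(mulrA (a * b)) e.
  by rewrite b3.
by rewrite Hb -Hc.
Qed.

Theorem theorem2p1 (R : pzRingType) (star : R -> R) (a ag ad : R) :
  involution star ->
  is_group_inverse a ag ->
  is_MP_inverse star a ad ->
  (is_SEP star a <-> is_projection star (a * star ag * ad * ag)).
Proof.
move=> inv Hg Hm; have inv' := inv; case: inv' => ss sa sm.
case: (Hg) => H1 H2 H3; case: (Hm) => M1 M2 M3 M4.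
have g1 : a * ag * ag = ag by rewrite H3 H2.
have g2 : ag * a * a = a by rewrite -H3 H1.
have g3 : a * a * ag = a by rewrite -mulrA H3 mulrA H1.
split.
- case=> b [c [Hb Hc sc cb]].
  have cad : c = ad by apply: mp_uniq Hc Hm.
  have bag : b = ag by apply: grp_uniq Hb Hg.
  rewrite cad in sc cb; rewrite bag in cb.
  have e1 : a * star ag * ad * ag = a * ag.
    have sa' : star ag = a by rewrite -cb -sc ss.
    by rewrite sa' cb g3.
  rewrite e1; split; first by rewrite mulrA H1.
  by rewrite -cb M3.
- case=> ee es.
  set e := a * star ag * ad * ag in ee es.
  have s1 : star (a * ag) * ad = ad.
    transitivity (star (a * ag) * star (ad * a) * ad); first by rewrite M4 -mulrA M2.
    have g4 : a * (a * ag) = a by rewrite mulrA g3.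
    by rewrite -sm -(mulrA ad a) g4 M4 M2.
  have s2 : ad * a * star a = star a.
    by symmetry; rewrite -{1}M1 -mulrA sm M4.
  have s3 : e * (a * a * star a * ad) = a * ad.
    rewrite /e !mulrA (L3 g2) (L3 s2) (L2 (esym (sm a ag))).
    by rewrite (L2 s1).
  have s4 : e * (a * ad) = a * ad by rewrite -{1}s3 mulrA ee s3.
  have s5 : e * a = a by rewrite -{1}M1 mulrA s4 M1.
  have s6 : e * (a * ag) = e by rewrite /e mulrA (L3 H2).
  have eg : e = a * ag by rewrite -s6 mulrA s5.
  have gh : star (a * ag) = a * ag by rewrite -eg -es.
  have Hmag : is_MP_inverse star a ag.
    by split => //; rewrite -H3 gh.
  have adag : ad = ag by apply: mp_uniq Hm Hmag.
  have eg' : a * star ag * ag * ag = a * ag by rewrite -eg /e adag.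
  have t1 : a * a = a * star ag.
    transitivity (a * ag * a * a); first by rewrite H1.
    rewrite -eg' (L3 g2) -mulrA -H3 -gh -mulrA -sm.
    by rewrite g1.
  have t2 : a = star ag.
    transitivity (ag * (a * a)); first by rewrite mulrA g2.
    by rewrite t1 mulrA -H3 -gh -sm mulrA H2.
  exists ag, ag; split => //.
  by rewrite t2 ss.
Qed.
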